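(* Let $E$ be an IL FS encoder with $s$ states whose Kraft matrix is irreducible, and let $L_{\max}=\max_{z,x}L[f(z,x)]$. Let $x^n\in\mathcal{X}^n$ and $z_1\in\mathcal{Z}$, define $z_{i+1}=g(z_i,x_i)$ for $i=1,\dots,n$, and assume $x^n$ is cyclic with respect to $g$, i.e., $z_{n+1}=z_1$. Extend both sequences periodically, $x_{i+n}=x_i$, $z_{i+n}=z_i$. For $1\le\ell\le n$, let $\hat P$ be the empirical distribution on $\mathcal{Z}\times\mathcal{X}^\ell$ given by $$\hat P(z,w^\ell)=\frac1n\big|\{1\le i\le n:\ z_i=z,\ (x_i,x_{i+1},\dots,x_{i+\ell-1})=w^\ell\}\big|,$$ and let $\hat H(X_\ell\mid X^{\ell-1})$ be the conditional entropy (in bits) of the last coordinate given the first $\ell-1$ coordinates under the $\mathcal{X}^\ell$-marginal of $\hat P$. Then $$\frac1n\sum_{i=1}^n L[f(z_i,x_i)]\ \ge\ \hat H(X_\ell\mid X^{\ell-1})-\frac{2\log_2 s+(s-1)L_{\max}}{\ell}.$$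
   Context: A finite-state (FS) encoder is a quintuple $E=(\mathcal{X},\mathcal{Y},\mathcal{Z},f,g)$, where $\mathcal{X}$ is a finite source alphabet of size $\alpha$, $\mathcal{Y}$ is a finite set of binary strings (possibly containing the empty string, of length $0$), $\mathcal{Z}$ is a finite set of $s$ states, $f:\mathcal{Z}\times\mathcal{X}\to\mathcal{Y}$ is the output function and $g:\mathcal{Z}\times\mathcal{X}\to\mathcal{Z}$ is the next-state function. For $z\in\mathcal{Z}$ and $x^n=(x_1,\dots,x_n)\in\mathcal{X}^n$, set $z_1=z$, $z_{i+1}=g(z_i,x_i)$; write $g(z,x^n)=z_{n+1}$ and let $f(z,x^n)$ denote the binary string obtained by concatenating $f(z_1,x_1),\dots,f(z_n,x_n)$; its length is $L[f(z,x^n)]=\sum_{i=1}^n L[f(z_i,x_i)]$, where $L(\cdot)$ denotes the length of a binary string. The encoder is information lossless (IL) if for every $z\in\mathcal{Z}$ and every $n\ge1$, the map $x^n\mapsto (f(z,x^n),g(z,x^n))$ is injective on $\mathcal{X}^n$. The Kraft matrix of $E$ is the $s\times s$ nonnegative matrix $K$ with entries $K_{zz'}=\sum_{\{x\in\mathcal{X}:\ g(z,x)=z'\}}2^{-L[f(z,x)]}$ (an empty sum is $0$). *)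

(* Defs.v *)
From HB Require Import structures.
From mathcomp Require Import all_boot all_order all_algebra.
From mathcomp Require Import all_classical all_reals all_analysis.
Set Implicit Arguments. Unset Strict Implicit. Unset Printing Implicit Defensive.
Import Order.TTheory GRing.Theory Num.Theory.
Local Open Scope ring_scope.

Section FSEncoder.
Variables (X Z : finType).
Variables (f : Z -> X -> seq bool) (g : Z -> X -> Z).

Fixpoint grun (z : Z) (xs : seq X) : Z :=
  if xs is a :: xs' then grun (g z a) xs' else z.

Fixpoint frun (z : Z) (xs : seq X) : seq bool :=
  if xs is a :: xs' then f z a ++ frun (g z a) xs' else [::].

Definition info_lossless : Prop :=
  forall (z : Z) (n : nat) (u v : n.-tuple X),
    frun z u = frun z v -> grun z u = grun z v -> u = v.

Definition kraft_matrix (R : realType) : 'M[R]_#|Z| :=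
  \matrix_(i, j) \sum_(a : X | g (enum_val i) a == enum_val j)
                   (2%:R ^- size (f (enum_val i) a) : R).

Definition Lmax : nat := \max_(z : Z) \max_(a : X) size (f z a).
End FSEncoder.

Definition irreducible_mx (R : realType) (m : nat) (A : 'M[R]_m) : Prop :=
  forall i j : 'I_m, exists k : nat, 0 < (A ^+ k) i j.

Definition log2 (R : realType) (x : R) : R := ln x / ln 2%:R.

Section Empirical.
Variables (R : realType) (X Z : finType) (g : Z -> X -> Z).
Variables (n : nat) (x : nat -> X) (z1 : Z).

(* state sequence (0-indexed): zs i = z_{i+1} *)
Definition zs (i : nat) : Z := grun g z1 (mkseq x i).

Definition window (l i : nat) : seq X := mkseq (fun j => x (i + j)) l.

Definition Phat (l : nat) (z : Z) (w : l.-tuple X) : R :=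
  (#|[set i : 'I_n | (zs i == z) && (window l i == w)]|%:R) / n%:R.

Definition PhatX (l : nat) (w : l.-tuple X) : R := \sum_(z : Z) Phat z w.

Definition PhatPre (l : nat) (u : seq X) : R :=
  \sum_(w : l.-tuple X | take l.-1 w == u) PhatX w.

(* conditional entropy (bits) of last coordinate given first l-1,
   convention 0 log 0 = 0 *)
Definition Hcond (l : nat) : R :=
  - \sum_(w : l.-tuple X | 0 < PhatX w)
      PhatX w * log2 (PhatX w / PhatPre l (take l.-1 w)).
End Empirical.

(* Main.v *)
Require Import Defs.
From HB Require Import structures.
From mathcomp Require Import all_boot all_order all_algebra.
From mathcomp Require Import all_classical all_reals all_analysis.
From mathcomp Require Import ring lra.
Import Order.TTheory GRing.Theory Num.Theory.
Local Open Scope ring_scope.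
Set Implicit Arguments. Unset Strict Implicit. Unset Printing Implicit Defensive.

Section Counting.
Variables (R : realType) (n : nat).

Definition cnt (T : eqType) (phi : nat -> T) (t : T) : R :=
  \sum_(j < n) (phi j == t)%:R.
Definition ent (T : eqType) (phi : nat -> T) : R :=
  \sum_(i < n) - ln (cnt phi (phi i) / n%:R).

Lemma group_sum (T : finType) (phi : nat -> T) (F : T -> R) :
  \sum_(i < n) F (phi i) = \sum_(t : T) cnt phi t * F t.
Proof.
rewrite /cnt.
under [RHS]eq_bigr do rewrite mulr_suml.
rewrite exchange_big /=; apply: eq_bigr => i _.
rewrite (bigD1 (phi i)) //= eqxx mul1r big1 ?addr0 // => t /negbTE.
by rewrite eq_sym => ->; rewrite mul0r.
Qed.

Lemma cnt_ge0 (T : eqType) (phi : nat -> T) t : 0 <= cnt phi t.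
Proof. by apply: sumr_ge0 => j _; rewrite ler0n. Qed.

Lemma cnt_ge1 (T : eqType) (phi : nat -> T) (i : 'I_n) : 1 <= cnt phi (phi i).
Proof.
rewrite /cnt (bigD1 i) //= eqxx lerDl.
by apply: sumr_ge0 => j _; rewrite ler0n.
Qed.

Lemma cnt_eq (T T' : eqType) (phi : nat -> T) (psi : nat -> T') (i : nat) :
  (forall j : 'I_n, (phi j == phi i) = (psi j == psi i)) ->
  cnt phi (phi i) = cnt psi (psi i).
Proof. by move=> H; apply: eq_bigr => j _; rewrite H. Qed.

Lemma ent_eq (T T' : eqType) (phi : nat -> T) (psi : nat -> T') :
  (forall i j : 'I_n, (phi j == phi i) = (psi j == psi i)) ->
  ent phi = ent psi.
Proof. by move=> H; apply: eq_bigr => i _; rewrite (@cnt_eq _ _ phi psi i). Qed.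

Lemma shift_sum (F : nat -> R) : F n = F 0%N ->
  \sum_(i < n) F i.+1 = \sum_(i < n) F i.
Proof.
move=> H; case: n H => [|m] H; first by rewrite !big_ord0.
rewrite big_ord_recr /= H [RHS]big_ord_recl addrC; congr (_ + _).

Qed.

Lemma cnt_shift (T : eqType) (phi : nat -> T) t : phi n = phi 0%N ->
  cnt (fun i => phi i.+1) t = cnt phi t.
Proof. by move=> H; rewrite /cnt (@shift_sum (fun j => (phi j == t)%:R)) // H. Qed.

Lemma ent_shift (T : eqType) (phi : nat -> T) : phi n = phi 0%N ->
  ent (fun i => phi i.+1) = ent phi.
Proof.
move=> H; rewrite /ent.
under eq_bigr do rewrite cnt_shift //.
by rewrite (@shift_sum (fun i => - ln (cnt phi (phi i) / n%:R))) // H.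
Qed.

End Counting.

Lemma ln_le_sub1 (R : realType) (y : R) : 0 < y -> ln y <= y - 1.
Proof.
move=> y0; have := @le_ln1Dx R (y - 1); rewrite addrCA subrr addr0; apply.
by rewrite ltrBrDl subrr.
Qed.

Lemma ln_divP (R : realType) (a b : R) : 0 < a -> 0 < b -> ln (a / b) = ln a - ln b.
Proof. by move=> a0 b0; rewrite ln_div // posrE. Qed.

Lemma cnt_mul_le (R : realType) (n : nat) (T : eqType) (phi : nat -> T) t (y : R) :
  0 <= y -> cnt R n phi t * (y / cnt R n phi t) <= y.
Proof.
move=> y0; have [->|nz] := eqVneq (cnt R n phi t) 0; first by rewrite mul0r.
by rewrite mulrCA divff // mulr1.
Qed.

Lemma gibbs (R : realType) (n : nat) (T : finType) (phi : nat -> T) (q : T -> R) :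
  (0 < n)%N -> (forall t, 0 <= q t) -> \sum_t q t <= 1 ->
  (forall i : 'I_n, 0 < q (phi i)) ->
  ent R n phi <= \sum_(i < n) - ln (q (phi i)).
Proof.
move=> n0 q0 q1 qp.
have n0R : (0 : R) < n%:R by rewrite ltr0n.
have key : forall i : 'I_n, ln (q (phi i)) - ln (cnt R n phi (phi i) / n%:R)
   <= q (phi i) * n%:R / cnt R n phi (phi i) - 1.
  move=> i; have c1 := cnt_ge1 R phi i.
  have cp : (0 : R) < cnt R n phi (phi i) by apply: lt_le_trans c1.
  rewrite -ln_divP ?divr_gt0 //.
  have -> : q (phi i) / (cnt R n phi (phi i) / n%:R) = q (phi i) * n%:R / cnt R n phi (phi i).
    by rewrite invf_div mulrA.
  by apply: ln_le_sub1; rewrite !mulr_gt0 ?invr_gt0.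
have S : \sum_(i < n) (ln (q (phi i)) - ln (cnt R n phi (phi i) / n%:R)) <= 0.
  apply: le_trans (ler_sum _ (fun i _ => key i)) _.
  rewrite sumrB sumr_const card_ord subr_le0.
  rewrite (group_sum n phi (fun t => q t * n%:R / cnt R n phi t)).
  apply: le_trans (_ : \sum_t q t * n%:R <= _).
    apply: ler_sum => t _; apply: cnt_mul_le.
    by rewrite mulr_ge0 // ler0n.
  by rewrite -mulr_suml -[X in _ <= X]mul1r ler_wpM2r // ler0n.
rewrite /ent -subr_ge0 -sumrB.
apply: le_trans (_ : 0 <= - \sum_(i < n) (ln (q (phi i)) - ln (cnt R n phi (phi i) / n%:R))) _.
  by rewrite oppr_ge0.
rewrite -sumrN le_eqVlt; apply/orP; left; apply/eqP; apply: eq_bigr => i _.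
by rewrite opprB opprK addrC.
Qed.

Lemma cnt_marg1 (R : realType) (n : nat) (T1 T2 : finType)
  (phi : nat -> T1) (psi : nat -> T2) b :
  \sum_(a : T1) cnt R n (fun i => (phi i, psi i)) (a, b) = cnt R n psi b.
Proof.
rewrite /cnt exchange_big /=; apply: eq_bigr => j _.
rewrite (bigD1 (phi j)) //= xpair_eqE eqxx /= big1 ?addr0 // => a /negbTE.
by rewrite xpair_eqE eq_sym => ->.
Qed.

Lemma cnt_marg2 (R : realType) (n : nat) (T1 T2 : finType)
  (phi : nat -> T1) (psi : nat -> T2) b :
  \sum_(a : T1) cnt R n (fun i => (psi i, phi i)) (b, a) = cnt R n psi b.
Proof.
rewrite /cnt exchange_big /=; apply: eq_bigr => j _.
rewrite (bigD1 (phi j)) //= xpair_eqE eqxx andbT big1 ?addr0 // => a /negbTE.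
by rewrite xpair_eqE eq_sym => ->; rewrite andbF.
Qed.

Lemma cnt_total (R : realType) (n : nat) (T : finType) (phi : nat -> T) :
  \sum_(t : T) cnt R n phi t = n%:R.
Proof.
rewrite /cnt exchange_big /= -[n in RHS]card_ord -sumr_const.
apply: eq_bigr => j _; rewrite (bigD1 (phi j)) //= eqxx big1 ?addr0 // => a /negbTE.
by rewrite eq_sym => ->.
Qed.

Lemma submod (R : realType) (n : nat) (A B C : finType)
  (al : nat -> A) (be : nat -> B) (ga : nat -> C) :
  ent R n (fun i => (al i, be i, ga i)) + ent R n be
  <= ent R n (fun i => (al i, be i)) + ent R n (fun i => (be i, ga i)).
Proof.
set abc := (fun i => (al i, be i, ga i)).
set ab := (fun i => (al i, be i)).
set bc := (fun i => (be i, ga i)).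
have c1 := @cnt_ge1 R n.
have cp : forall (T : eqType) (phi : nat -> T) (i : 'I_n), (0:R) < cnt R n phi (phi i).
  by move=> T phi i; apply: lt_le_trans (c1 _ phi i).
have [n0|n0] := posnP n.
  by rewrite /ent n0 !big_ord0 !addr0.
have n0R : (0 : R) < n%:R by rewrite ltr0n.
have key : forall i : 'I_n,
  - ln (cnt R n abc (abc i) / n%:R) - ln (cnt R n be (be i) / n%:R)
  - (- ln (cnt R n ab (ab i) / n%:R) - ln (cnt R n bc (bc i) / n%:R))
  <= cnt R n ab (ab i) * cnt R n bc (bc i) / cnt R n be (be i) / cnt R n abc (abc i) - 1.
  move=> i.
  have p1 := cp _ abc i; have p2 := cp _ be i; have p3 := cp _ ab i; have p4 := cp _ bc i.
  set Y := _ / cnt R n abc (abc i).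
  have Yp : 0 < Y by rewrite /Y; do ! (apply: divr_gt0 || apply: mulr_gt0).
  suff -> : - ln (cnt R n abc (abc i) / n%:R) - ln (cnt R n be (be i) / n%:R)
    - (- ln (cnt R n ab (ab i) / n%:R) - ln (cnt R n bc (bc i) / n%:R)) = ln Y.
    exact: ln_le_sub1.
  rewrite /Y !ln_divP // ?lnM ?posrE //; try by do ! (apply: divr_gt0 || apply: mulr_gt0).
  ring.
have S1 : \sum_(i < n) (cnt R n ab (ab i) * cnt R n bc (bc i) / cnt R n be (be i)
              / cnt R n abc (abc i)) <= n%:R.
  rewrite (group_sum n abc (fun t => cnt R n ab (t.1.1, t.1.2) * cnt R n bc (t.1.2, t.2)
              / cnt R n be t.1.2 / cnt R n abc t)) /=.
  apply: le_trans (_ : \sum_(t : A * B * C) cnt R n ab (t.1.1, t.1.2) * cnt R n bc (t.1.2, t.2)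
              / cnt R n be t.1.2 <= _).
    apply: ler_sum => t _; apply: cnt_mul_le.
    by do ! (apply: mulr_ge0 || apply: divr_ge0); rewrite ?invr_ge0 ?cnt_ge0.
  have -> : \sum_(t : A * B * C) cnt R n ab (t.1.1, t.1.2) * cnt R n bc (t.1.2, t.2)
              / cnt R n be t.1.2
     = \sum_(b : B) cnt R n be b.
    have E : forall (H : A * B * C -> R),
        \sum_(t : A * B * C) H t = \sum_(a : A) \sum_(b : B) \sum_(c : C) H (a, b, c).
      move=> H; transitivity (\sum_(p : A * B) \sum_(c : C) H (p, c)).
        by rewrite pair_bigA; apply: eq_bigr => -[p c].
      by rewrite [RHS]pair_bigA; apply: eq_bigr => -[a b].
    rewrite E exchange_big /=.
    apply: eq_bigr => b _.
    under eq_bigr do under eq_bigr do rewrite -mulrA.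
    under eq_bigr do rewrite -mulr_sumr.
    rewrite -mulr_suml -mulr_suml /ab /bc cnt_marg1 cnt_marg2.
    have [->|nz] := eqVneq (cnt R n be b) 0; first by rewrite !mul0r.
    by rewrite mulrCA divff // mulr1.
  by rewrite cnt_total.
rewrite -subr_le0 opprD addrA.
rewrite /ent -!sumrN -!big_split /=.
apply: le_trans (_ : _ <= \sum_(i < n) (cnt R n ab (ab i) * cnt R n bc (bc i)
   / cnt R n be (be i) / cnt R n abc (abc i) - 1)) _.
  apply: ler_sum => i _; apply: le_trans (key i); lra.
by rewrite sumrB sumr_const card_ord subr_le0.
Qed.

Lemma window_S (X : finType) (x : nat -> X) k i :
  window x k.+1 i = x i :: window x k i.+1.
Proof.
rewrite /window /mkseq /= addn0; congr (_ :: _).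
rewrite -[1%N]addn0 iotaDl -map_comp; apply: eq_map => j /=.
by rewrite add1n addnS addSn.
Qed.

Lemma window_rcons (X : finType) (x : nat -> X) k i :
  window x k.+1 i = rcons (window x k i) (x (i + k)%N).
Proof. by rewrite /window mkseqS. Qed.

Lemma window_per (X : finType) (x : nat -> X) n k i :
  (forall i, x (i + n)%N = x i) -> window x k (i + n) = window x k i.
Proof.
move=> Hp; rewrite /window; apply: eq_mkseq => j.
by rewrite addnAC Hp.
Qed.

Definition wtup (X : finType) (x : nat -> X) k i : k.-tuple X :=
  @Tuple k X (window x k i) (introT eqP (size_mkseq _ _)).

Lemma wtup_eq (X : finType) (x : nat -> X) k i j :
  (wtup x k i == wtup x k j) = (window x k i == window x k j).
Proof. by rewrite -val_eqE. Qed.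

Section H.
Variables (R : realType) (X : finType) (x : nat -> X) (n : nat).
Hypothesis Hper : forall i, x (i + n)%N = x i.
Hypothesis n0 : (0 < n)%N.

Definition hh k := ent R n (window x k).

Lemma hh0 : hh 0 = 0.
Proof.
rewrite /hh /ent big1 // => i _.
have -> : cnt R n (window x 0) (window x 0 i) = n%:R.
  rewrite /cnt /window /= (eq_bigr (fun _ => 1)) ?sumr_const ?card_ord //.
by rewrite divff ?ln1 ?oppr0 // pnatr_eq0 -lt0n.
Qed.

Lemma hh_shift k : ent R n (fun i => window x k i.+1) = hh k.
Proof.
by rewrite /hh; apply: ent_shift; rewrite -[n]add0n window_per.
Qed.

Lemma hh_submod m : hh m.+2 + hh m <= 2 * hh m.+1.
Proof.
have := submod R n x (wtup x m \o S) (fun i => x (i.+1 + m)%N).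
have -> : ent R n (fun i => (x i, (wtup x m \o S) i, x (i.+1 + m)%N)) = hh m.+2.
  apply: ent_eq => i j /=.
  rewrite (window_S _ m.+1 j) (window_S _ m.+1 i) (window_rcons _ m j.+1) (window_rcons _ m i.+1).
  by rewrite eqseq_cons eqseq_rcons !xpair_eqE wtup_eq andbA.
have -> : ent R n (wtup x m \o S) = hh m.
  rewrite -hh_shift; apply: ent_eq => i j /=; by rewrite wtup_eq.
have -> : ent R n (fun i => (x i, (wtup x m \o S) i)) = hh m.+1.
  apply: ent_eq => i j /=.
  by rewrite (window_S _ m j) (window_S _ m i) eqseq_cons !xpair_eqE wtup_eq.
have -> : ent R n (fun i => ((wtup x m \o S) i, x (i.+1 + m)%N)) = hh m.+1.
  rewrite -hh_shift; apply: ent_eq => i j /=.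
  by rewrite (window_rcons _ m j.+1) (window_rcons _ m i.+1) eqseq_rcons !xpair_eqE wtup_eq.
by move=> H; lra.
Qed.

Definition dd k := hh k.+1 - hh k.

Lemma dd_mono k j : dd (k + j) <= dd k.
Proof.
elim: j => [|j IH]; first by rewrite addn0.
apply: le_trans IH; rewrite addnS /dd; have := hh_submod (k + j); lra.
Qed.

Lemma hh_chain l : (1 <= l)%N -> l%:R * (hh l - hh l.-1) <= hh l.
Proof.
case: l => // l _ /=; rewrite -/(dd l).
have -> : hh l.+1 = \sum_(k < l.+1) dd k.
  elim: l => [|l IH]; first by rewrite big_ord1 /dd hh0 subr0.
  by rewrite big_ord_recr /= -IH /dd; lra.
rewrite mulr_natl -[in X in X <= _](card_ord l.+1) -sumr_const.
apply: ler_sum => k _.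
have := ltn_ord k; rewrite ltnS => /subnKC H; rewrite -[X in dd X <= _]H; exact: dd_mono.
Qed.

End H.

Lemma card_set_sum (R : realType) (n : nat) (P : pred 'I_n) :
  (#|[set i : 'I_n | P i]|%:R : R) = \sum_(i < n) (P i)%:R.
Proof.
rewrite -sum1_card natr_sum big_mkcond /=; apply: eq_bigr => i _.
by rewrite inE; case: (P i).
Qed.

Section HC.
Variables (R : realType) (X Z : finType) (g : Z -> X -> Z).
Variables (n : nat) (x : nat -> X) (z1 : Z) (l : nat).
Hypothesis n0 : (0 < n)%N.
Hypothesis l1 : (1 <= l)%N.

Lemma PhatX_cnt (w : l.-tuple X) : PhatX R g n x z1 w = cnt R n (wtup x l) w / n%:R.
Proof.
rewrite /PhatX /Phat -mulr_suml; congr (_ / _).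
under eq_bigr do rewrite card_set_sum.
rewrite exchange_big /=; apply: eq_bigr => i _.
rewrite (bigD1 (zs g x z1 i)) //= eqxx /= big1 ?addr0.
  by rewrite -val_eqE.
by move=> z /negbTE; rewrite eq_sym => ->.
Qed.

Lemma take_window i : take l.-1 (window x l i) = window x l.-1 i.
Proof.
case: l l1 => // k _ /=; by rewrite window_rcons -cats1 take_size_cat // size_mkseq.
Qed.

Lemma PhatPre_cnt i :
  PhatPre R g n x z1 l (take l.-1 (wtup x l i)) = cnt R n (window x l.-1) (window x l.-1 i) / n%:R.
Proof.
set u := take l.-1 (wtup x l i).
transitivity (\sum_(w : l.-tuple X) cnt R n (wtup x l) w * ((take l.-1 w == u)%:R / n%:R)).
  rewrite /PhatPre big_mkcond; apply: eq_bigr => w _; rewrite PhatX_cnt.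
  by case: ifP => _; rewrite /= ?mul0r ?mulr0 ?mul1r.
rewrite -(group_sum n (wtup x l) (fun t => (take l.-1 t == u)%:R / n%:R)) /=.
rewrite -mulr_suml /cnt; congr (_ / _); apply: eq_bigr => j _.
by rewrite /u /= !take_window.
Qed.

Lemma Hcond_hh : Hcond R g n x z1 l * ln 2%:R * n%:R = hh R x n l - hh R x n l.-1.
Proof.
have ln2 : (0 : R) < ln 2%:R by apply: ln_gt0; rewrite ltr1n.
have n0R : (0 : R) < n%:R by rewrite ltr0n.
have cp : forall (T : eqType) (phi : nat -> T) (i : 'I_n), (0:R) < cnt R n phi (phi i).
  by move=> T phi i; apply: lt_le_trans (cnt_ge1 R phi i).
set L := fun w : l.-tuple X => log2 (PhatX R g n x z1 w / PhatPre R g n x z1 l (take l.-1 w)).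
have E1 : Hcond R g n x z1 l = - \sum_(w : l.-tuple X) cnt R n (wtup x l) w * (L w / n%:R).
  rewrite /Hcond; congr (- _); rewrite big_mkcond; apply: eq_bigr => w _.
  rewrite -/(L w) PhatX_cnt; case: ifP => [_|/negbT]; first by rewrite mulrAC mulrA.
  rewrite -leNgt => H; suff -> : cnt R n (wtup x l) w = 0 by rewrite !mul0r.
  apply/eqP; rewrite eq_le cnt_ge0 andbT.
  by move: H; rewrite pmulr_lle0 // invr_gt0.
rewrite E1 -(group_sum n (wtup x l) (fun w => L w / n%:R)) /hh /ent.
rewrite -sumrB -sumrN !mulr_suml; apply: eq_bigr => i _.
rewrite /L /log2 PhatX_cnt PhatPre_cnt.
have -> : cnt R n (wtup x l) (wtup x l i) = cnt R n (window x l) (window x l i).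
  by apply: cnt_eq => j; rewrite wtup_eq.
have p1 := cp _ (window x l) i; have p2 := cp _ (window x l.-1) i.
rewrite ln_divP ?divr_gt0 //.
field; apply/andP; split; apply: lt0r_neq0 => //.
Qed.

End HC.

Lemma card_set_sumT (R : realType) (T : finType) (P : pred T) :
  (#|[set i : T | P i]|%:R : R) = \sum_(i : T) (P i)%:R.
Proof.
rewrite -sum1_card natr_sum big_mkcond /=; apply: eq_bigr => i _.
by rewrite inE; case: (P i).
Qed.

Lemma sum_sub_le (R : realType) (T : finType) (A : {pred T}) (F : T -> R) :
  (forall t, 0 <= F t) -> \sum_(t in A) F t <= \sum_t F t.
Proof.
move=> F0; rewrite big_mkcond /=; apply: ler_sum => t _.
by case: ifP => // _; apply: F0.
Qed.

Lemma pow2V_ge0 (R : realType) k : (0 : R) <= 2%:R ^- k.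
Proof. by rewrite invr_ge0 exprn_ge0 // ler0n. Qed.

Lemma pow2V_gt0 (R : realType) k : (0 : R) < 2%:R ^- k.
Proof. by rewrite invr_gt0 exprn_gt0 // ltr0n. Qed.

Lemma pow2V_le (R : realType) k m : (k <= m)%N -> (2%:R ^- m : R) <= 2%:R ^- k.
Proof.
move=> km; rewrite lef_pV2 ?posrE ?exprn_gt0 ?ltr0n //.
by rewrite ler_eXn2l // ltr1n.
Qed.

Section Enc.
Variables (R : realType) (X Z : finType) (f : Z -> X -> seq bool) (g : Z -> X -> Z).

Lemma grun_cat z s1 s2 : grun g z (s1 ++ s2) = grun g (grun g z s1) s2.
Proof. by elim: s1 z => //= a s IH z; rewrite IH. Qed.

Lemma frun_cat z s1 s2 : frun f g z (s1 ++ s2) = frun f g z s1 ++ frun f g (grun g z s1) s2.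
Proof. by elim: s1 z => //= a s IH z; rewrite IH catA. Qed.

Lemma size_f_le z a : (size (f z a) <= Lmax f)%N.
Proof.
rewrite /Lmax; apply: (leq_trans _ (leq_bigmax z)); exact: (leq_bigmax a).
Qed.

Lemma size_frun_le z s : (size (frun f g z s) <= size s * Lmax f)%N.
Proof.
elim: s z => //= a s IH z; rewrite size_cat mulSn.
by apply: leq_add; [exact: size_f_le | exact: IH].
Qed.

Definition T m z z' : R :=
  \sum_(w : m.-tuple X) (grun g z w == z')%:R * 2%:R ^- size (frun f g z w).

Lemma T_ge0 m z z' : 0 <= T m z z'.
Proof. by apply: sumr_ge0 => w _; rewrite mulr_ge0 ?ler0n ?pow2V_ge0. Qed.

Lemma T_path z (w : seq X) : 2%:R ^- (size w * Lmax f) <= T (size w) z (grun g z w).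
Proof.
rewrite /T (bigD1 (in_tuple w)) //= eqxx mul1r.
apply: le_trans (_ : 2%:R ^- size (frun f g z w) <= _).
  exact/pow2V_le/size_frun_le.
rewrite lerDl; apply: sumr_ge0 => t _; rewrite mulr_ge0 ?ler0n ?pow2V_ge0 //.
Qed.

Lemma T_mul a b z z' z'' : T a z z' * T b z' z'' <= T (a + b) z z''.
Proof.
rewrite /T mulr_suml.
under eq_bigr do rewrite mulr_sumr.
rewrite pair_bigA /=.
set F := fun w : (a + b).-tuple X => (grun g z w == z'')%:R * (2%:R ^- size (frun f g z w) : R).
apply: le_trans (_ : \sum_(p : a.-tuple X * b.-tuple X) F (cat_tuple p.1 p.2) <= _).
  apply: ler_sum => -[u v] _ /=; rewrite /F /= grun_cat frun_cat size_cat.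
  case: eqP => [->|_]; last by rewrite !mul0r mulr_ge0 ?ler0n ?pow2V_ge0.
  case: (grun g z' v == z''); last by rewrite !mul0r mulr0.
  by rewrite !mul1r exprD invfM.
rewrite -(big_imset (fun w => F w) (h := fun p : a.-tuple X * b.-tuple X => cat_tuple p.1 p.2)).
  by apply: sum_sub_le => w; rewrite /F mulr_ge0 ?ler0n ?pow2V_ge0.
move=> [u v] [u' v'] _ _ /= /(congr1 val) /= /eqP.
by rewrite eqseq_cat ?size_tuple // => /andP[/eqP/val_inj -> /eqP/val_inj ->].
Qed.

End Enc.

Section Enc2.
Variables (R : realType) (X Z : finType) (f : Z -> X -> seq bool) (g : Z -> X -> Z).
Hypothesis HIL : info_lossless f g.

Lemma card_Ak m z z' k :
  (#|[set w : m.-tuple X | (grun g z w == z') && (size (frun f g z w) == k)]| <= 2 ^ k)%N.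
Proof.
set A := [set w : m.-tuple X | _].
pose h := fun w : m.-tuple X => insubd (nseq_tuple k false) (frun f g z w) : k.-tuple bool.
have inj : {in A &, injective h}.
  move=> u v; rewrite !inE => /andP[/eqP gu /eqP su] /andP[/eqP gv /eqP sv] huv.
  apply: (HIL (z := z)); last by rewrite gu gv.
  have hu : val (h u) = frun f g z u by rewrite /h insubdK //; exact/eqP.
  have hv : val (h v) = frun f g z v by rewrite /h insubdK //; exact/eqP.
  by rewrite -hu -hv huv.
rewrite -(card_in_imset inj).
apply: leq_trans (max_card _) _.
by rewrite card_tuple card_bool.
Qed.

Lemma T_IL m z z' : T R f g m z z' <= (m * Lmax f).+1%:R.
Proof.
set M := (m * Lmax f).+1.
have E : forall w : m.-tuple X, (grun g z w == z')%:R * (2%:R ^- size (frun f g z w) : R)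
   = \sum_(k < M) ((grun g z w == z') && (size (frun f g z w) == k))%:R * 2%:R ^- k.
  move=> w; have lt : (size (frun f g z w) < M)%N.
    by rewrite ltnS; have := size_frun_le f g z w; rewrite size_tuple.
  rewrite (bigD1 (Ordinal lt)) //= eqxx andbT big1 ?addr0 // => k /negbTE nk.
  suff -> : (size (frun f g z w) == k) = false by rewrite andbF mul0r.
  by apply/negbTE; apply: contraNneq (negbT nk) => e; apply/eqP/val_inj.
rewrite /T (eq_bigr _ (fun w _ => E w)) exchange_big /=.
apply: le_trans (_ : _ <= \sum_(k < M) (1:R)) _; last by rewrite sumr_const card_ord.
apply: ler_sum => k _; rewrite -mulr_suml -card_set_sumT.
rewrite ler_pdivrMr ?exprn_gt0 ?ltr0n // mul1r -natrX ler_nat.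
exact: card_Ak.
Qed.

End Enc2.

Lemma bern (R : realType) (d : R) j : 0 <= d -> 1 + j%:R * d <= (1 + d) ^+ j.
Proof.
move=> d0; elim: j => [|j IH]; first by rewrite mul0r addr0 expr0.
rewrite exprS; apply: le_trans (_ : (1 + d) * (1 + j%:R * d) <= _).
  have j0 : (0:R) <= j%:R by rewrite ler0n.
  rewrite -addn1 natrD; nra.
by apply: ler_wpM2l => //; lra.
Qed.

Lemma growth (R : realType) (c A : R) : 0 <= A ->
  (forall j : nat, c ^+ j <= j%:R * A + 1) -> c <= 1.
Proof.
move=> A0 H; rewrite leNgt; apply/negP => c1.
set d := c - 1.
have d0 : 0 < d by rewrite /d subr_gt0.
have dd0 : 0 < d * d by rewrite mulr_gt0.
set B := Num.Def.archi_bound (2 * A / (d * d)).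
have hB : 2 * A / (d * d) < B%:R by apply: archi_boundP; rewrite divr_ge0 ?mulr_ge0 // ltW.
have hB2 : 2 * A < B%:R * (d * d) by rewrite -ltr_pdivrMr.
have b1 := bern B (ltW d0).
have b2 := H (B + B)%N.
have J0 : (0:R) <= B%:R by rewrite ler0n.
have ce : 1 + d = c by rewrite /d addrC subrK.
rewrite ce in b1.
rewrite exprD natrD in b2.
set J := B%:R in J0 hB2 b1 b2.
set cj := c ^+ B in b1 b2.
have s0 : 0 <= 1 + J * d by rewrite addr_ge0 ?mulr_ge0 // ltW.
have s1 : (1 + J * d) * (1 + J * d) <= cj * cj by apply: ler_pM.
have s2 : J * (2 * A) <= J * (J * (d * d)) by apply: ler_wpM2l => //; apply: ltW.
have s3 : J * d <= 0 by nra.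
have s4 : J * (d * d) <= 0 by rewrite mulrA; nra.
lra.
Qed.

Section Enc3.
Variables (R : realType) (X Z : finType) (f : Z -> X -> seq bool) (g : Z -> X -> Z).

Definition erel := [rel a b : Z | [exists c, g a c == b]].

Lemma path_w z p : path erel z p -> exists w : seq X, size w = size p /\ grun g z w = last z p.
Proof.
elim: p z => [|y p IH] z /=; first by exists [::].
move=> /andP[/existsP[c /eqP gc] pth]; have [w [sw gw]] := IH y pth.
by exists (c :: w); rewrite /= gc sw gw.
Qed.

Lemma connect_w z z' : connect erel z z' ->
  exists w : seq X, (size w < #|Z|)%N /\ grun g z w = z'.
Proof.
move=> /connectP[p pth ->].
case: (shortenP pth) => p' pth' un' _.
have [w [sw gw]] := path_w pth'.
exists w; split => //; rewrite sw.
have := max_card (mem (z :: p')); rewrite (card_uniqP un') /=.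
done.
Qed.

Lemma kraft_ge0 i j : 0 <= kraft_matrix f g R i j.
Proof. by rewrite mxE; apply: sumr_ge0 => a _; apply: pow2V_ge0. Qed.

Lemma kraft_connect k i j : 0 < (kraft_matrix f g R ^+ k) i j ->
  connect erel (enum_val i) (enum_val j).
Proof.
elim: k i j => [|k IH] i j.
  rewrite expr0 mxE; case: (eqVneq i j) => [->|ne]; first by rewrite connect0.
  by rewrite ltxx.
rewrite exprS -mulmxE mxE => H.
case: (pickP (fun m => 0 < kraft_matrix f g R i m * (kraft_matrix f g R ^+ k) m j)) => [m Hm|none]; last first.
  suff : \sum_m kraft_matrix f g R i m * (kraft_matrix f g R ^+ k) m j <= 0 by rewrite leNgt H.
  by apply: sumr_le0 => m _; rewrite leNgt none.
have Kp : 0 < kraft_matrix f g R i m.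
  rewrite lt_def kraft_ge0 andbT; apply/negP => /eqP e.
  by move: Hm; rewrite e mul0r ltxx.
have Kk : 0 < (kraft_matrix f g R ^+ k) m j by move: Hm; rewrite pmulr_rgt0.
apply: connect_trans (IH _ _ Kk); apply: connect1 => /=.
apply/existsP; case: (pickP (fun a => g (enum_val i) a == enum_val m)) => [a Ha|none].
  by exists a.
by move: Kp; rewrite mxE big_pred0 ?ltxx.
Qed.

Lemma irr_path (Hirr : irreducible_mx (kraft_matrix f g R)) z z' :
  exists w : seq X, (size w < #|Z|)%N /\ grun g z w = z'.
Proof.
have [k Hk] := Hirr (enum_rank z) (enum_rank z').
apply: connect_w; have := kraft_connect Hk; by rewrite !enum_rankK.
Qed.

End Enc3.

Section Enc4.
Variables (R : realType) (X Z : finType) (f : Z -> X -> seq bool) (g : Z -> X -> Z).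
Hypothesis HIL : info_lossless f g.
Hypothesis Hirr : irreducible_mx (kraft_matrix f g R).

Lemma T_bound l z z' : T R f g l z z' <= 2%:R ^+ ((#|Z| - 1) * Lmax f).
Proof.
have [w [sw gw]] := irr_path Hirr z' z.
set k := size w.
have tpos : 2%:R ^- (k * Lmax f) <= T R f g k z' z by rewrite -gw; apply: T_path.
set M := (l + k)%N.
set c := T R f g l z z' * T R f g k z' z.
have c0 : 0 <= c by rewrite mulr_ge0 ?T_ge0.
have cM : c <= T R f g M z z by apply: T_mul.
have pow : forall j, c ^+ j <= T R f g (j * M) z z.
  elim=> [|j IH].
    rewrite expr0 mul0n; have := T_path R f g z [::]; by rewrite /= expr0 invr1.
  rewrite exprSr mulSnr; apply: le_trans (T_mul R f g (j * M) M z z z).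
  by apply: ler_pM => //; apply: exprn_ge0.
have c1 : c <= 1.
  apply: (growth (A := (M * Lmax f)%:R)); first by rewrite ler0n.
  move=> j; apply: le_trans (pow j) _; apply: le_trans (T_IL R HIL _ _ _) _.
  by rewrite -addn1 natrD -mulnA natrM.
have tp : 0 < T R f g k z' z by apply: lt_le_trans tpos; apply: pow2V_gt0.
have h1 : T R f g l z z' <= (T R f g k z' z)^-1 by rewrite -(mul1r (T R f g k z' z)^-1) ler_pdivlMr.
apply: le_trans h1 _.
apply: le_trans (_ : (2%:R ^- (k * Lmax f))^-1 <= _).
  by rewrite lef_pV2 ?posrE ?pow2V_gt0.
rewrite invrK ler_eXn2l ?ltr1n // leq_mul2r; apply/orP; right.
by rewrite -ltnS -subSn ?subSS ?subn0 //; apply: leq_ltn_trans sw.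
Qed.

Lemma C_bound l :
  \sum_(w : l.-tuple X) \sum_(z : Z) (2%:R ^- size (frun f g z w) : R)
  <= #|Z|%:R ^+ 2 * 2%:R ^+ ((#|Z| - 1) * Lmax f).
Proof.
rewrite exchange_big /=.
have E : forall z, \sum_(w : l.-tuple X) (2%:R ^- size (frun f g z w) : R) = \sum_(z' : Z) T R f g l z z'.
  move=> z; rewrite /T exchange_big /=; apply: eq_bigr => w _.
  rewrite (bigD1 (grun g z w)) //= eqxx mul1r big1 ?addr0 // => z' /negbTE.
  by rewrite eq_sym => ->; rewrite mul0r.
rewrite (eq_bigr _ (fun z _ => E z)).
apply: le_trans (_ : \sum_(z : Z) \sum_(z' : Z) (2%:R ^+ ((#|Z| - 1) * Lmax f) : R) <= _).
  by apply: ler_sum => z _; apply: ler_sum => z' _; apply: T_bound.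
rewrite !sumr_const -mulrnA; rewrite le_eqVlt; apply/orP; left; apply/eqP; rewrite mulrC -natrX -[LHS]mulr_natr -!natrM; by rewrite -natrX -natrM expnS expn1.
Qed.

End Enc4.

Section Main.
Variables (R : realType) (X Z : finType) (f : Z -> X -> seq bool) (g : Z -> X -> Z).
Variables (n : nat) (x : nat -> X) (z1 : Z).
Hypothesis Hper : forall i, x (i + n)%N = x i.
Hypothesis Hcyc : zs g x z1 n = z1.

Lemma zsS i : zs g x z1 i.+1 = g (zs g x z1 i) (x i).
Proof. by rewrite /zs mkseqS -cats1 grun_cat. Qed.

Lemma zs_per i : zs g x z1 (i + n) = zs g x z1 i.
Proof.
elim: i => [|i IH]; first by rewrite add0n Hcyc.
by rewrite addSn !zsS IH Hper.
Qed.

Lemma size_frun_window k i :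
  size (frun f g (zs g x z1 i) (window x k i)) =
  (\sum_(j < k) size (f (zs g x z1 (i + j)) (x (i + j))))%N.
Proof.
elim: k i => [|k IH] i; first by rewrite big_ord0.
rewrite window_S /= -zsS size_cat IH big_ord_recl /= addn0; congr (_ + _)%N.
by apply: eq_bigr => j _; rewrite /bump /= add1n addnS.
Qed.

Lemma shift_sum_k (F : nat -> R) j : (forall i, F (i + n)%N = F i) ->
  \sum_(i < n) F (i + j)%N = \sum_(i < n) F i.
Proof.
move=> Fp; elim: j => [|j IH]; first by under eq_bigr do rewrite addn0.
rewrite -IH; under eq_bigr do rewrite addnS -addSn.
apply: (@shift_sum R n (fun i => F (i + j)%N)).
by rewrite addnC Fp add0n.
Qed.

Lemma stepA l :
  \sum_(i < n) (size (frun f g (zs g x z1 i) (window x l i)))%:R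
  = l%:R * \sum_(i < n) (size (f (zs g x z1 i) (x i)))%:R :> R.
Proof.
under eq_bigr do rewrite size_frun_window natr_sum.
rewrite exchange_big /=.
pose F := fun i => (size (f (zs g x z1 i) (x i)))%:R : R.
have Fp : forall i, F (i + n)%N = F i by move=> i; rewrite /F zs_per Hper.
have E := fun j => shift_sum_k j Fp.
under eq_bigr => j _ do rewrite (E j).
by rewrite sumr_const card_ord mulr_natl.
Qed.

End Main.

Unset Implicit Arguments. Set Strict Implicit. Set Printing Implicit Defensive.

Theorem mainTheorem7 (R : realType) (X Z : finType)
  (f : Z -> X -> seq bool) (g : Z -> X -> Z)
  (HIL : info_lossless f g)
  (Hirr : irreducible_mx (kraft_matrix f g R))
  (n : nat) (x : nat -> X) (z1 : Z)
  (Hper : forall i, x (i + n) = x i)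
  (Hcyc : zs g x z1 n = z1)
  (l : nat) (Hl1 : (1 <= l)%N) (Hln : (l <= n)%N) :
  (n%:R)^-1 * (\sum_(i < n) (size (f (zs g x z1 i) (x i)))%:R)
  >= Hcond R g n x z1 l
     - (2 * log2 (#|Z|%:R : R) + (#|Z| - 1)%:R * (Lmax f)%:R) / l%:R.
Proof.
have n0 : (0 < n)%N by apply: leq_trans Hln.
have n0R : (0 : R) < n%:R by rewrite ltr0n.
have l0R : (0 : R) < l%:R by rewrite ltr0n.
have L2 : (0 : R) < ln 2%:R by apply: ln_gt0; rewrite ltr1n.
set S := \sum_(i < n) (size (f (zs g x z1 i) (x i)))%:R : R.
set W := wtup x l.
set G := fun w : l.-tuple X => \sum_(z : Z) (2%:R ^- size (frun f g z w) : R).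
set C := \sum_(w : l.-tuple X) G w.
have Gp : forall w, 0 < G w.
  move=> w; rewrite /G (bigD1 z1) //= ltr_pwDl ?pow2V_gt0 //.
  by apply: sumr_ge0 => z _; apply: pow2V_ge0.
have Cp : 0 < C.
  rewrite /C (bigD1 (W 0%N)) //= ltr_pwDl ?Gp //.
  by apply: sumr_ge0 => w _; apply: ltW.
have H1 : ent R n W <= \sum_(i < n) - ln (G (W i) / C).
  apply: (gibbs (q := fun w => G w / C)) => //=.
  - by move=> w; apply: divr_ge0; [apply: ltW | apply: ltW].
  - by rewrite -mulr_suml divff ?lt0r_neq0.
  - by move=> i; apply: divr_gt0.
have H2 : forall i : 'I_n, - ln (G (W i) / C)
   <= ln C + (size (frun f g (zs g x z1 i) (window x l i)))%:R * ln 2%:R.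
  move=> i; rewrite ln_divP ?Gp //.
  have Gi : 2%:R ^- size (frun f g (zs g x z1 i) (window x l i)) <= G (W i).
    rewrite /G (bigD1 (zs g x z1 i)) //= lerDl.
    by apply: sumr_ge0 => z _; apply: pow2V_ge0.
  have h : ln (2%:R ^- size (frun f g (zs g x z1 i) (window x l i))) <= ln (G (W i)).
    by rewrite ler_ln ?posrE ?pow2V_gt0 ?Gp.
  rewrite lnV ?posrE ?exprn_gt0 ?ltr0n // lnXn ?ltr0n // in h.
  rewrite -(mulr_natr (ln (2%:R : R))) in h; lra.
have H3 : ent R n W = hh R x n l.
  by apply: ent_eq => i j; rewrite wtup_eq.
have H4 : hh R x n l <= n%:R * ln C + ln 2%:R * (l%:R * S).
  rewrite -H3; apply: le_trans H1 _; apply: le_trans (ler_sum _ (fun i _ => H2 i)) _.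
  rewrite big_split /= sumr_const card_ord mulr_natl -mulr_suml stepA //.
  by rewrite mulrC.
have H5 := hh_chain R Hper n0 Hl1.
have H6 := Hcond_hh R g x z1 n0 Hl1.
have H7 : ln C <= 2 * ln (#|Z|%:R) + ((#|Z| - 1) * Lmax f)%:R * ln 2%:R.
  have sz : (0 < #|Z|)%N.
    by apply/card_gt0P; exists z1.
  have sp : (0 : R) < #|Z|%:R by rewrite ltr0n.
  have Bp : (0:R) < 2%:R ^+ ((#|Z| - 1) * Lmax f) by rewrite exprn_gt0 ?ltr0n.
  have : ln C <= ln (#|Z|%:R ^+ 2 * 2%:R ^+ ((#|Z| - 1) * Lmax f)).
    rewrite ler_ln ?posrE ?mulr_gt0 ?exprn_gt0 //; exact: C_bound.
  rewrite lnM ?posrE ?exprn_gt0 // !lnXn ?ltr0n //.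
  rewrite -(mulr_natr (ln (#|Z|%:R : R))) -(mulr_natr (ln (2%:R : R))) natrM.
  move=> h; nra.
set Hc := Hcond R g n x z1 l in H6 *.
set lC := ln C in H4 H7.
set ls := ln (#|Z|%:R : R) in H7 *.
set K := ((#|Z| - 1) * Lmax f)%:R : R in H7.
have -> : (#|Z| - 1)%:R * (Lmax f)%:R = K by rewrite /K natrM.
rewrite /log2 -/ls.
have key : Hc * ln 2%:R * n%:R * l%:R <= n%:R * (2 * ls + K * ln 2%:R) + ln 2%:R * (l%:R * S).
  rewrite H6; nra.
have key2 : Hc <= (n%:R * (2 * ls + K * ln 2%:R) + ln 2%:R * (l%:R * S)) / (ln 2%:R * n%:R * l%:R).
  have pos : (0:R) < ln 2%:R * n%:R * l%:R by apply: mulr_gt0 => //; apply: mulr_gt0.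
  rewrite ler_pdivlMr //; lra.
have E : (n%:R * (2 * ls + K * ln 2%:R) + ln 2%:R * (l%:R * S)) / (ln 2%:R * n%:R * l%:R)
   = (2 * (ls / ln 2%:R) + K) / l%:R + n%:R^-1 * S.
  field; rewrite !lt0r_neq0 //.
rewrite E in key2; lra.
Qed.
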